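(* Let $(\mathfrak{g},[\cdot,\cdot]_{\mathfrak{g}})$ be a Leibniz algebra over a field $\mathbf{K}$, $(V;\rho^L,\rho^R)$ a representation, and $T:V\to\mathfrak{g}$ a relative Rota-Baxter operator. If $\mathcal{Z}^1(V,\mathfrak{g})=\partial_T(\mathrm{Nij}(T))$, then $T$ is rigid.
   Context: A Leibniz algebra is a vector space $\mathfrak{g}$ with bilinear $[\cdot,\cdot]_{\mathfrak{g}}$ satisfying $[x,[y,z]_{\mathfrak{g}}]_{\mathfrak{g}}=[[x,y]_{\mathfrak{g}},z]_{\mathfrak{g}}+[y,[x,z]_{\mathfrak{g}}]_{\mathfrak{g}}$. A representation $(V;\rho^L,\rho^R)$: linear $\rho^L,\rho^R:\mathfrak{g}\to\mathfrak{gl}(V)$ with $\rho^L([x,y]_{\mathfrak{g}})=[\rho^L(x),\rho^L(y)]$, $\rho^R([x,y]_{\mathfrak{g}})=[\rho^L(x),\rho^R(y)]$, $\rho^R(y)\rho^L(x)=-\rho^R(y)\rho^R(x)$. $L_xy=[x,y]_{\mathfrak{g}}$. A relative Rota-Baxter operator is a linear $T:V\to\mathfrak{g}$ with $[Tv_1,Tv_2]_{\mathfrak{g}}=T(\rho^L(Tv_1)v_2+\rho^R(Tv_2)v_1)$. $C^1(V,\mathfrak{g})=\mathrm{Hom}(V,\mathfrak{g})$; $\partial_T:\mathfrak{g}\to C^1$ is $(\partial_Tx)(v)=T\rho^L(x)v-[x,Tv]_{\mathfrak{g}}$, and $\partial_T:C^1\to\mathrm{Hom}(V\otimes V,\mathfrak{g})$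 is $(\partial_Tf)(u,v)=[Tu,f(v)]_{\mathfrak{g}}+[f(u),Tv]_{\mathfrak{g}}-T(\rho^L(f(u))v+\rho^R(f(v))u)-f(\rho^L(Tu)v+\rho^R(Tv)u)$; $\mathcal{Z}^1(V,\mathfrak{g})$ is the kernel of the latter. An element $x\in\mathfrak{g}$ is a Nijenhuis element associated to $T$ if for all $y,z\in\mathfrak{g}$, $u\in V$: $[[x,y]_{\mathfrak{g}},[x,z]_{\mathfrak{g}}]_{\mathfrak{g}}=0$, $\rho^L([x,y]_{\mathfrak{g}})\rho^L(x)=0$, $\rho^R([x,y]_{\mathfrak{g}})\rho^L(x)=0$, $[x,T\rho^L(x)u-[x,Tu]_{\mathfrak{g}}]_{\mathfrak{g}}=0$; $\mathrm{Nij}(T)$ is the set of these. Formal deformations: the bracket and $\rho^L,\rho^R$ extend $\mathbf{K}[[t]]$-bilinearly to $\mathfrak{g}[[t]]$, $V[[t]]$. A formal deformation of $T$ is $T_t=\sum_{i\ge0}\mathfrak{T}_it^i$, $\mathfrak{T}_i\in\mathrm{Hom}(V,\mathfrak{g})$, $\mathfrak{T}_0=T$, extended $\mathbf{K}[[t]]$-linearly, with $[T_t(u),T_t(v)]_{\mathfrak{g}}=T_t(\rho^L(T_t(u))v+\rho^R(T_t(v))u)$ for $u,v\in V$. Two formal deformations $\bar T_t,T_t$ of $T$ are equivalent if there exist $x\in\mathfrak{g}$, $\phi_i\in\mathfrak{gl}(\mathfrak{g})$, $\varphi_i\in\mathfrak{gl}(V)$ ($i\ge2$) such that $\phi_t=\mathrm{Id}_{\mathfrak{g}}+tL_x+\sum_{i\ge2}\phi_it^i$,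 $\varphi_t=\mathrm{Id}_V+t\rho^L(x)+\sum_{i\ge2}\varphi_it^i$ satisfy $[\phi_t(y),\phi_t(z)]_{\mathfrak{g}}=\phi_t[y,z]_{\mathfrak{g}}$, $\varphi_t\rho^L(y)u=\rho^L(\phi_t(y))\varphi_t(u)$, $\varphi_t\rho^R(y)u=\rho^R(\phi_t(y))\varphi_t(u)$, and $T_t\circ\varphi_t=\phi_t\circ\bar T_t$. A formal deformation $T_t$ is trivial if it is equivalent to $T$ (the constant deformation, taken as $\bar T_t=T$). $T$ is rigid if every formal deformation of $T$ is trivial. *)

(* Defs.v *)
From HB Require Import structures.
From mathcomp Require Import all_boot all_algebra.
Set Implicit Arguments. Unset Strict Implicit. Unset Printing Implicit Defensive.
Import GRing.Theory.
Local Open Scope ring_scope.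

Section Leib.
Variables (K : fieldType) (g V : lmodType K).
Variable br : g -> g -> g.
Variables rhoL rhoR : g -> V -> V.

Definition leibniz_algebra : Prop :=
  (forall x, linear (br x)) /\ (forall z, linear (fun x => br x z)) /\
  (forall x y z, br x (br y z) = br (br x y) z + br y (br x z)).

Definition leibniz_rep : Prop :=
  (forall x, linear (rhoL x)) /\ (forall x, linear (rhoR x)) /\
  (forall v, linear (fun x => rhoL x v)) /\ (forall v, linear (fun x => rhoR x v)) /\
  (forall x y v, rhoL (br x y) v = rhoL x (rhoL y v) - rhoL y (rhoL x v)) /\
  (forall x y v, rhoR (br x y) v = rhoL x (rhoR y v) - rhoR y (rhoL x v)) /\
  (forall x y v, rhoR y (rhoL x v) = - rhoR y (rhoR x v)).

Definition relative_RB (T : V -> g) : Prop :=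
  linear T /\
  forall v1 v2, br (T v1) (T v2) = T (rhoL (T v1) v2 + rhoR (T v2) v1).

Definition dT0 (T : V -> g) (x : g) : V -> g :=
  fun v => T (rhoL x v) - br x (T v).

Definition dT1 (T : V -> g) (f : V -> g) : V -> V -> g :=
  fun u v => br (T u) (f v) + br (f u) (T v)
             - T (rhoL (f u) v + rhoR (f v) u)
             - f (rhoL (T u) v + rhoR (T v) u).

Definition Z1 (T : V -> g) (f : V -> g) : Prop :=
  linear f /\ forall u v, dT1 T f u v = 0.

Definition Nij (T : V -> g) (x : g) : Prop :=
  (forall y z, br (br x y) (br x z) = 0) /\
  (forall y v, rhoL (br x y) (rhoL x v) = 0) /\
  (forall y v, rhoR (br x y) (rhoL x v) = 0) /\
  (forall u, br x (T (rhoL x u) - br x (T u)) = 0).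

(* Formal deformation T_t = sum_i Tt i t^i, the identity compared
   coefficientwise in t (u, v in V). *)
Definition formal_deformation (T : V -> g) (Tt : nat -> V -> g) : Prop :=
  (forall i, linear (Tt i)) /\ Tt 0%N = T /\
  forall (n : nat) (u v : V),
    \sum_(i < n.+1) br (Tt i u) (Tt (n - i)%N v) =
    \sum_(i < n.+1) Tt i (rhoL (Tt (n - i)%N u) v + rhoR (Tt (n - i)%N v) u).

(* Tt is equivalent to Tbt: phi_t = sum phi i t^i, varphi_t = sum varphi i t^i *)
Definition deformation_equiv (Tbt Tt : nat -> V -> g) : Prop :=
  exists (x : g) (phi : nat -> g -> g) (vphi : nat -> V -> V),
    (forall i, linear (phi i)) /\ (forall i, linear (vphi i)) /\
    phi 0%N = id /\ phi 1%N = br x /\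
    vphi 0%N = id /\ vphi 1%N = rhoL x /\
    (forall n y z, \sum_(i < n.+1) br (phi i y) (phi (n - i)%N z) = phi n (br y z)) /\
    (forall n y u, vphi n (rhoL y u) =
                   \sum_(i < n.+1) rhoL (phi i y) (vphi (n - i)%N u)) /\
    (forall n y u, vphi n (rhoR y u) =
                   \sum_(i < n.+1) rhoR (phi i y) (vphi (n - i)%N u)) /\
    (forall n u, \sum_(i < n.+1) Tt i (vphi (n - i)%N u) =
                 \sum_(i < n.+1) phi i (Tbt (n - i)%N u)).

Definition const_deformation (T : V -> g) : nat -> V -> g :=
  fun i => if i is 0%N then T else (fun _ => 0).

Definition trivial_deformation (T : V -> g) (Tt : nat -> V -> g) : Prop :=
  deformation_equiv (const_deformation T) Tt.

Definition rigid (T : V -> g) : Prop :=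
  forall Tt, formal_deformation T Tt -> trivial_deformation T Tt.

End Leib.

(* Main.v *)
Require Import Defs.
From mathcomp Require Import all_boot all_algebra zify.
Set Implicit Arguments. Unset Strict Implicit. Unset Printing Implicit Defensive.
Import GRing.Theory.
Local Open Scope ring_scope.

Section Gen.
Variable C : zmodType.
Implicit Types (h : nat -> nat -> C) (a b c : nat -> C).

Definition cvx h n : C := \sum_(i < n.+1) h i (n - i)%N.
Definition sh k a n : C := if (k <= n)%N then a (n - k)%N else 0.

Lemma cvx_ext h1 h2 n : (forall i j, h1 i j = h2 i j) -> cvx h1 n = cvx h2 n.
Proof. by move=> H; apply: eq_bigr => i _; rewrite H. Qed.

Lemma cvx_add h1 h2 n : cvx (fun i j => h1 i j + h2 i j) n = cvx h1 n + cvx h2 n.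
Proof. by rewrite /cvx big_split. Qed.

Lemma cvx0 n : cvx (fun _ _ => 0) n = 0.
Proof. by rewrite /cvx big1. Qed.

Lemma cvx_rev h n : cvx h n = cvx (fun i j => h j i) n.
Proof.
rewrite /cvx (reindex_inj rev_ord_inj) /=; apply: eq_bigr => i _.
have := ltn_ord i; rewrite subSS => ?; congr (h _ _); lia.
Qed.

Lemma cvx_shl k h n :
  cvx (fun i j => if (k <= i)%N then h (i - k)%N j else 0) n = sh k (cvx h) n.
Proof.
rewrite /cvx /sh; case: leqP => [kn|nk]; last first.
  rewrite big1 // => i _; case: leqP => // ki; have := ltn_ord i; lia.
rewrite -(big_mkord (fun _ => true) (fun i => if (k <= i)%N then h (i - k)%N (n - i)%N else 0)).
rewrite (@big_cat_nat _ _ _ k) //=; last by lia.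
rewrite big_nat_cond big1 ?add0r; last first.
  by move=> i /andP[/andP[_ ik] _]; rewrite leqNgt ik.
rewrite -{1}(add0n k) big_addn -(big_mkord (fun _ => true) (fun i => h i (n - k - i)%N)).
have -> : (n.+1 - k = (n - k).+1)%N by lia.
apply: eq_bigr => i _; rewrite leq_addl; congr (h _ _); lia.
Qed.

Lemma sh_ext k a b n : (forall m, a m = b m) -> sh k a n = sh k b n.
Proof. by move=> H; rewrite /sh H. Qed.

Lemma cvx_shr k h n :
  cvx (fun i j => if (k <= j)%N then h i (j - k)%N else 0) n = sh k (cvx h) n.
Proof.
rewrite cvx_rev (cvx_shl k (fun i j => h j i)); apply: sh_ext => m; by rewrite cvx_rev.
Qed.

Lemma shD k a b n : sh k (fun m => a m + b m) n = sh k a n + sh k b n.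
Proof. by rewrite /sh; case: leqP; rewrite ?addr0. Qed.

Lemma shN k a n : sh k (fun m => - a m) n = - sh k a n.
Proof. by rewrite /sh; case: leqP; rewrite ?oppr0. Qed.

Lemma sh0 k n : sh k (fun _ => 0) n = 0.
Proof. by rewrite /sh; case: leqP. Qed.

Lemma shinj k (L : C -> C) a b : (0 < k)%N ->
  (forall n, a n + sh k (fun m => L (a m)) n = b n + sh k (fun m => L (b m)) n) ->
  forall n, a n = b n.
Proof.
move=> k0 H; elim/ltn_ind => n IH; have := H n; rewrite /sh; case: leqP => kn.
  by rewrite (IH (n - k)%N); [move/addIr | lia].
by rewrite !addr0.
Qed.

Fixpoint solf k (L : C -> C) c (f n : nat) : C :=
  if f is f'.+1 then c n - (if (k <= n)%N then L (solf k L c f' (n - k)%N) else 0) else 0.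
Definition solve k L c n := solf k L c n.+1 n.

Lemma solf_stable k L c : (0 < k)%N -> forall f f' n, (n < f)%N -> (n < f')%N ->
  solf k L c f n = solf k L c f' n.
Proof.
move=> k0; elim=> [|f IH] [|f'] n //= nf nf'; case: leqP => // kn.
by rewrite (IH f') //; lia.
Qed.

Lemma solve_eq k L c : (0 < k)%N -> forall n,
  solve k L c n + sh k (fun m => L (solve k L c m)) n = c n.
Proof.
move=> k0 n; rewrite /solve /sh /=; case: leqP => kn; last by rewrite subr0 addr0.
by rewrite (@solf_stable k L c k0 n (n - k).+1 (n - k)) ?subrK //; lia.
Qed.

Lemma cvx_l0 h n : (forall i j, (0 < i)%N -> h i j = 0) -> cvx h n = h 0%N n.
Proof.
by move=> H; rewrite /cvx big_ord_recl big1 ?addr0 ?subn0 // => i _; rewrite H.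
Qed.

Lemma cvx_r0 h n : (forall i j, (0 < j)%N -> h i j = 0) -> cvx h n = h n 0%N.
Proof.
move=> H; rewrite cvx_rev cvx_l0 // => i j /H; done.
Qed.

End Gen.

Section Lin.
Variables (K : fieldType) (U W : lmodType K).
Lemma lin_add (f : U -> W) : linear f -> forall a b, f (a + b) = f a + f b.
Proof. by move=> Hf a b; have := Hf 1 a b; rewrite !scale1r. Qed.
Lemma lin0 (f : U -> W) : linear f -> f 0 = 0.
Proof. by move=> Hf; have := Hf (-1) 0 0; rewrite scaler0 addr0 scaleN1r addNr. Qed.
Lemma linN (f : U -> W) : linear f -> forall a, f (- a) = - f a.
Proof. by move=> Hf a; have := Hf (-1) a 0; rewrite (lin0 Hf) !addr0 !scaleN1r. Qed.
Lemma linB (f : U -> W) : linear f -> forall a b, f (a - b) = f a - f b.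
Proof. by move=> Hf a b; rewrite (lin_add Hf) (linN Hf). Qed.
Lemma lin_cvx (f : U -> W) h n : linear f -> f (cvx h n) = cvx (fun i j => f (h i j)) n.
Proof. by move=> Hf; rewrite /cvx (big_morph f (lin_add Hf) (lin0 Hf)). Qed.
Lemma lin_sh (f : U -> W) k a n : linear f -> f (sh k a n) = sh k (fun m => f (a m)) n.
Proof. by move=> Hf; rewrite /sh; case: leqP; rewrite ?(lin0 Hf). Qed.
End Lin.

Section Bil.
Variables A B C : zmodType.
Variable f : A -> B -> C.
Hypotheses (fDl : forall a a' b, f (a + a') b = f a b + f a' b)
           (fDr : forall a b b', f a (b + b') = f a b + f a b')
           (f0l : forall b, f 0 b = 0) (f0r : forall a, f a 0 = 0).

Lemma cvx_bil m a1 a2 b1 b2 n :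
  cvx (fun i j => f (a1 i + sh m a2 i) (b1 j + sh m b2 j)) n =
  cvx (fun i j => f (a1 i) (b1 j)) n
  + sh m (cvx (fun i j => f (a2 i) (b1 j) + f (a1 i) (b2 j))) n
  + sh m (sh m (cvx (fun i j => f (a2 i) (b2 j)))) n.
Proof.
have E1 : sh m (cvx (fun i j => f (a2 i) (b1 j) + f (a1 i) (b2 j))) n =
  cvx (fun i j => (if (m <= i)%N then f (a2 (i - m)%N) (b1 j) else 0)
                 + (if (m <= j)%N then f (a1 i) (b2 (j - m)%N) else 0)) n.
  rewrite cvx_add (cvx_shl m (fun i j => f (a2 i) (b1 j)))
     (cvx_shr m (fun i j => f (a1 i) (b2 j))) -shD.
  by apply: sh_ext => l; rewrite cvx_add.
have E2 : sh m (sh m (cvx (fun i j => f (a2 i) (b2 j)))) n =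
  cvx (fun i j => if (m <= i)%N then (if (m <= j)%N then f (a2 (i - m)%N) (b2 (j - m)%N) else 0) else 0) n.
  rewrite (cvx_shl m (fun i j => if (m <= j)%N then f (a2 i) (b2 (j - m)%N) else 0)).
  by apply: sh_ext => l; rewrite (cvx_shr m (fun i j => f (a2 i) (b2 j))).
rewrite E1 E2 -!cvx_add; apply: cvx_ext => i j; rewrite /sh.
case: leqP => _; case: leqP => _; rewrite ?fDl ?fDr ?f0l ?f0r ?addr0 ?add0r ?addrA //.
congr (_ + _); rewrite -!addrA; congr (_ + _); exact: addrC.
Qed.
End Bil.

Lemma cvx_r1 (B C : zmodType) (F : nat -> B -> C) m b1 b2 n :
  (forall i b b', F i (b + b') = F i b + F i b') -> (forall i, F i 0 = 0) ->
  cvx (fun i j => F i (b1 j + sh m b2 j)) n =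
  cvx (fun i j => F i (b1 j)) n + sh m (cvx (fun i j => F i (b2 j))) n.
Proof.
move=> FD F0; rewrite -(cvx_shr m (fun i j => F i (b2 j))) -cvx_add.
by apply: cvx_ext => i j; rewrite FD /sh; case: leqP; rewrite ?F0.
Qed.

Section Reord.
Variable C : zmodType.
Lemma reordR1 (p q r s t w : C) :
  (p + q) + ((r + s) + (t + w)) = (p + r) + (q + t) + (s + w).
Proof. by rewrite (addrACA p r q t) -[RHS]addrA (addrACA r t s w). Qed.
Lemma reord8 (a b c d e f A B : C) :
  (a + b) + (c + d) + ((e + A) + (f + B)) = a + c + ((b + f) + (e + d) + (A + B)).
Proof.
rewrite (addrACA a b c d) (addrACA e A f B) -[LHS]addrA; congr (_ + _).
rewrite [LHS]addrA; congr (_ + _).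
by rewrite (addrACA b d e f) (addrACA b f e d) [d + f]addrC.
Qed.
End Reord.

Lemma sh_z (C : zmodType) k (a : nat -> C) n : (forall l, a l = 0) -> sh k a n = 0.
Proof. by move=> H; rewrite /sh H; case: leqP. Qed.

Lemma cvx_ends (C : zmodType) (h : nat -> nat -> C) n : (0 < n)%N ->
  (forall i, (0 < i < n)%N -> h i (n - i)%N = 0) -> cvx h n = h 0%N n + h n 0%N.
Proof.
case: n => // n _ H; rewrite /cvx big_ord_recl big_ord_recr /= big1 ?add0r ?subn0 ?subnn //.
move=> i _; by rewrite H //= /bump add1n ltnS.
Qed.

Definition Id0 (C : zmodType) (n : nat) (y : C) : C := if n is 0%N then y else 0.

Section Lin2.
Variables (K : fieldType) (U W X : lmodType K).
Lemma lin_ext (f h : U -> W) : (forall u, f u = h u) -> linear h -> linear f.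
Proof. by move=> E Hh a u v; rewrite !E Hh. Qed.
Lemma lin_addf (f h : U -> W) : linear f -> linear h -> linear (fun u => f u + h u).
Proof. by move=> Hf Hh a u v; rewrite Hf Hh scalerDr addrACA. Qed.
Lemma lin_subf (f h : U -> W) : linear f -> linear h -> linear (fun u => f u - h u).
Proof. by move=> Hf Hh a u v; rewrite Hf Hh scalerBr opprD addrACA. Qed.
Lemma lin_zero : linear (fun _ : U => (0 : W)).
Proof. by move=> a u v; rewrite scaler0 addr0. Qed.
Lemma lin_comp (f : W -> X) (h : U -> W) : linear f -> linear h -> linear (fun u => f (h u)).
Proof. by move=> Hf Hh a u v; rewrite Hh Hf. Qed.
Lemma lin_id : linear (fun u : U => u).
Proof. by []. Qed.
Lemma lin_Id0 n : linear (@Id0 U n).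
Proof. by case: n => [|n] a u v /=; rewrite ?scaler0 ?addr0. Qed.
End Lin2.
From Stdlib Require Import ClassicalEpsilon FunctionalExtensionality.

Section Main.
Variables (K : fieldType) (g V : lmodType K).
Variable br : g -> g -> g.
Variables rhoL rhoR : g -> V -> V.
Variable T : V -> g.
Variable Tt : nat -> V -> g.
Hypothesis HL : leibniz_algebra br.
Hypothesis HR : leibniz_rep br rhoL rhoR.
Hypothesis HT : relative_RB br rhoL rhoR T.
Hypothesis HZ : forall f : V -> g, Z1 br rhoL rhoR T f <->
     exists2 x, Nij br rhoL rhoR T x & forall v, f v = dT0 br rhoL T x v.
Hypothesis HD : formal_deformation br rhoL rhoR T Tt.

Lemma brr x : linear (br x). Proof. by case: HL. Qed.
Lemma brl z : linear (fun x => br x z). Proof. by case: HL => _ []. Qed.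
Lemma leib x y z : br x (br y z) = br (br x y) z + br y (br x z).
Proof. by case: HL => _ []. Qed.
Lemma rLr x : linear (rhoL x). Proof. by case: HR. Qed.
Lemma rRr x : linear (rhoR x). Proof. by case: HR => _ []. Qed.
Lemma rLl v : linear (fun x => rhoL x v). Proof. by case: HR => _ [_ []]. Qed.
Lemma rRl v : linear (fun x => rhoR x v). Proof. by case: HR => _ [_ [_ []]]. Qed.
Lemma repL x y v : rhoL (br x y) v = rhoL x (rhoL y v) - rhoL y (rhoL x v).
Proof. by case: HR => _ [_ [_ [_ []]]]. Qed.
Lemma repR x y v : rhoR (br x y) v = rhoL x (rhoR y v) - rhoR y (rhoL x v).
Proof. by case: HR => _ [_ [_ [_ [_ []]]]]. Qed.
Lemma Tlin : linear T. Proof. by case: HT. Qed.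

Lemma brDr x a b : br x (a + b) = br x a + br x b. Proof. exact: (lin_add (brr x) a b). Qed.
Lemma brDl a b z : br (a + b) z = br a z + br b z. Proof. exact: (lin_add (brl z) a b). Qed.
Lemma br0r x : br x 0 = 0. Proof. exact: (lin0 (brr x) ). Qed.
Lemma br0l z : br 0 z = 0. Proof. exact: (lin0 (brl z) ). Qed.
Lemma brNr x a : br x (- a) = - br x a. Proof. exact: (linN (brr x) a). Qed.
Lemma brNl a z : br (- a) z = - br a z. Proof. exact: (linN (brl z) a). Qed.
Lemma rLDr x a b : rhoL x (a + b) = rhoL x a + rhoL x b. Proof. exact: (lin_add (rLr x) a b). Qed.
Lemma rLDl a b z : rhoL (a + b) z = rhoL a z + rhoL b z. Proof. exact: (lin_add (rLl z) a b). Qed.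
Lemma rL0r x : rhoL x 0 = 0. Proof. exact: (lin0 (rLr x) ). Qed.
Lemma rL0l z : rhoL 0 z = 0. Proof. exact: (lin0 (rLl z) ). Qed.
Lemma rLNl a z : rhoL (- a) z = - rhoL a z. Proof. exact: (linN (rLl z) a). Qed.
Lemma rLNr x a : rhoL x (- a) = - rhoL x a. Proof. exact: (linN (rLr x) a). Qed.
Lemma rRDr x a b : rhoR x (a + b) = rhoR x a + rhoR x b. Proof. exact: (lin_add (rRr x) a b). Qed.
Lemma rRDl a b z : rhoR (a + b) z = rhoR a z + rhoR b z. Proof. exact: (lin_add (rRl z) a b). Qed.
Lemma rR0r x : rhoR x 0 = 0. Proof. exact: (lin0 (rRr x) ). Qed.
Lemma rR0l z : rhoR 0 z = 0. Proof. exact: (lin0 (rRl z) ). Qed.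
Lemma rRNl a z : rhoR (- a) z = - rhoR a z. Proof. exact: (linN (rRl z) a). Qed.
Lemma rRNr x a : rhoR x (- a) = - rhoR x a. Proof. exact: (linN (rRr x) a). Qed.

Definition W (S : nat -> V -> g) u v j := rhoL (S j u) v + rhoR (S j v) u.
Definition Def (S : nat -> V -> g) := forall u v n,
  cvx (fun i j => br (S i u) (S j v)) n = cvx (fun i j => S i (W S u v j)) n.

Definition Sst m x (S : nat -> V -> g) n u :=
  solve m (br x) (fun l => S l u + sh m (fun j => S j (rhoL x u)) l) n.

Lemma Sst_eq m x S n u : (0 < m)%N ->
  Sst m x S n u + sh m (fun j => br x (Sst m x S j u)) n
  = S n u + sh m (fun j => S j (rhoL x u)) n.
Proof. by move=> m0; rewrite /Sst solve_eq. Qed.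

Lemma def_step m x S : (0 < m)%N -> Nij br rhoL rhoR T x ->
  (forall n, linear (S n)) -> Def S -> Def (Sst m x S).
Proof.
move=> m0 [N1 [N2 [N3 _]]] Slin DS u v.
set S' := Sst m x S.
have ES w l : S' l w + sh m (fun j => br x (S' j w)) l
            = S l w + sh m (fun j => S j (rhoL x w)) l by exact: Sst_eq.
have SD i : forall a b, S i (a + b) = S i a + S i b by exact: lin_add.
have S0 i : S i 0 = 0 by exact: lin0.
apply: (@shinj _ m (br x)) => // n.
have HA : cvx (fun i j => br (S' i u) (S' j v)) n
          + sh m (fun l => br x (cvx (fun i j => br (S' i u) (S' j v)) l)) n
  = cvx (fun i j => S i (W S u v j + sh m (fun l => W S (rhoL x u) v l + W S u (rhoL x v) l
                 + sh m (W S (rhoL x u) (rhoL x v)) l) j)) n.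
  transitivity (cvx (fun i j => br (S' i u + sh m (fun l => br x (S' l u)) i)
                                    (S' j v + sh m (fun l => br x (S' l v)) j)) n).
    rewrite (cvx_bil brDl brDr br0l br0r).
    have -> : sh m (sh m (cvx (fun i j => br (br x (S' i u)) (br x (S' j v))))) n = 0.
      rewrite (@sh_ext _ m _ (fun _ => 0)) ?sh0 // => l.
      rewrite (@sh_ext _ m _ (fun _ => 0)) ?sh0 // => l'.
      by rewrite (@cvx_ext _ _ (fun _ _ => 0)) ?cvx0 // => i j; apply: N1.
    rewrite addr0; congr (_ + _); apply: sh_ext => l.
    rewrite (lin_cvx _ _ (brr x)); apply: cvx_ext => i j; exact: leib.
  rewrite (@cvx_ext _ _ (fun i j => br (S i u + sh m (fun l => S l (rhoL x u)) i)
                                    (S j v + sh m (fun l => S l (rhoL x v)) j))); last first.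
    by move=> i j; rewrite !ES.
  rewrite (cvx_bil brDl brDr br0l br0r) (cvx_r1 _ _ _ _ SD S0) DS -addrA; congr (_ + _).
  rewrite [RHS](@sh_ext _ m _ (fun l => cvx (fun i j => S i (W S (rhoL x u) v j + W S u (rhoL x v) j)) l + sh m (cvx (fun i j => S i (W S (rhoL x u) (rhoL x v) j))) l)); last first.
    by move=> l; rewrite (cvx_r1 _ _ _ _ SD S0).
  rewrite shD; congr (_ + _).
    apply: sh_ext => l; rewrite cvx_add !DS -cvx_add.
    by apply: cvx_ext => i j; rewrite [RHS]SD.
  by apply: sh_ext => l; apply: sh_ext => l'; exact: DS.
have HB : cvx (fun i j => S' i (W S' u v j)) n
          + sh m (fun l => br x (cvx (fun i j => S' i (W S' u v j)) l)) n
  = cvx (fun i j => S i (W S' u v j + sh m (fun l => rhoL x (W S' u v l)) j)) n.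
  rewrite (@sh_ext _ m _ (cvx (fun i j => br x (S' i (W S' u v j))))); last first.
    by move=> l; rewrite (lin_cvx _ _ (brr x)).
  rewrite -(cvx_shl m (fun i j => br x (S' i (W S' u v j)))) -cvx_add.
  rewrite (cvx_r1 _ _ _ _ SD S0) -(cvx_shl m (fun i j => S i (rhoL x (W S' u v j)))) -cvx_add.
  by apply: cvx_ext => i j; exact: ES.
have PW : forall j, W S' u v j + sh m (fun l => rhoL x (W S' u v l)) j
   = W S u v j + sh m (fun l => W S (rhoL x u) v l + W S u (rhoL x v) l
                 + sh m (W S (rhoL x u) (rhoL x v)) l) j.
  move=> j.
  have E1 w l : S' l w = S l w + sh m (fun j => S j (rhoL x w)) l
                          - sh m (fun j => br x (S' j w)) l by rewrite -ES addrK.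
  have K1 w l z : rhoL (S' l w) (rhoL x z) = rhoL (S l w) (rhoL x z)
                  + sh m (fun j => rhoL (S j (rhoL x w)) (rhoL x z)) l.
    rewrite E1 rLDl rLNl rLDl /sh; case: leqP => _.
      by rewrite N2 oppr0 addr0.
    by rewrite rL0l oppr0 !addr0.
  have K2 w l z : rhoR (S' l w) (rhoL x z) = rhoR (S l w) (rhoL x z)
                  + sh m (fun j => rhoR (S j (rhoL x w)) (rhoL x z)) l.
    rewrite E1 rRDl rRNl rRDl /sh; case: leqP => _.
      by rewrite N3 oppr0 addr0.
    by rewrite rR0l oppr0 !addr0.
  have rhoLx y z : rhoL x (rhoL y z) = rhoL (br x y) z + rhoL y (rhoL x z).
    by rewrite repL subrK.
  have rhoRx y z : rhoL x (rhoR y z) = rhoR (br x y) z + rhoR y (rhoL x z).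
    by rewrite repR subrK.
  rewrite {1 2}/sh; case: (leqP m j) => hj; last first.
    have E0 w : S' j w = S j w by rewrite E1 /sh leqNgt hj /= subr0 addr0.
    by rewrite /W !E0 !addr0.
  have Cj w : S' j w + br x (S' (j - m)%N w) = S j w + S (j - m)%N (rhoL x w).
    by have := ES w j; rewrite /sh hj.
  rewrite /W rLDr rhoLx rhoRx reordR1 -rLDl -rRDl !Cj K1 K2 rLDl rRDl reord8.
  congr (_ + _); congr (_ + _); rewrite /sh /W; case: leqP => _ //.
  by rewrite addr0.
rewrite HA HB; apply: cvx_ext => i j; congr (S i _); exact: esym (PW j).
Qed.


Definition Hom (P : nat -> g -> g) := forall n y z,
  cvx (fun i j => br (P i y) (P j z)) n = P n (br y z).
Definition CompL (P : nat -> g -> g) (Q : nat -> V -> V) := forall n y u,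
  Q n (rhoL y u) = cvx (fun i j => rhoL (P i y) (Q j u)) n.
Definition CompR (P : nat -> g -> g) (Q : nat -> V -> V) := forall n y u,
  Q n (rhoR y u) = cvx (fun i j => rhoR (P i y) (Q j u)) n.
Definition Rel (P : nat -> g -> g) (Q : nat -> V -> V) (S : nat -> V -> g) := forall n u,
  cvx (fun i j => Tt i (Q j u)) n = cvx (fun i j => P i (S j u)) n.

Definition Pst m x (P : nat -> g -> g) n y := P n y + sh m (fun j => P j (br x y)) n.
Definition Qst m x (Q : nat -> V -> V) n u := Q n u + sh m (fun j => Q j (rhoL x u)) n.

Lemma hom_step m x P : Nij br rhoL rhoR T x -> (forall n, linear (P n)) ->
  Hom P -> Hom (Pst m x P).
Proof.
move=> [N1 _] Plin HP n y z; rewrite /Pst (cvx_bil brDl brDr br0l br0r) HP.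
rewrite (@sh_z _ m (sh m _)); last first.
  move=> l; apply: sh_z => l'; rewrite HP N1; exact: lin0.
rewrite addr0; congr (_ + _); apply: sh_ext => l.
by rewrite cvx_add !HP -(lin_add (Plin l)) -leib.
Qed.

Lemma compL_step m x P Q : Nij br rhoL rhoR T x -> (forall n, linear (Q n)) ->
  CompL P Q -> CompL (Pst m x P) (Qst m x Q).
Proof.
move=> [_ [N2 _]] Qlin HC n y u; rewrite /Pst /Qst (cvx_bil rLDl rLDr rL0l rL0r).
rewrite -(HC n y u) -addrA; congr (_ + _).
rewrite (@sh_z _ m (sh m _)); last first.
  move=> l; apply: sh_z => l'; rewrite -HC N2; exact: lin0.
rewrite addr0; apply: sh_ext => l.
rewrite cvx_add -!HC -(lin_add (Qlin l)); congr (Q l _).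
by rewrite repL subrK.
Qed.

Lemma compR_step m x P Q : Nij br rhoL rhoR T x -> (forall n, linear (Q n)) ->
  CompR P Q -> CompR (Pst m x P) (Qst m x Q).
Proof.
move=> [_ [_ [N3 _]]] Qlin HC n y u; rewrite /Pst /Qst (cvx_bil rRDl rRDr rR0l rR0r).
rewrite -(HC n y u) -addrA; congr (_ + _).
rewrite (@sh_z _ m (sh m _)); last first.
  move=> l; apply: sh_z => l'; rewrite -HC N3; exact: lin0.
rewrite addr0; apply: sh_ext => l.
rewrite cvx_add -!HC -(lin_add (Qlin l)); congr (Q l _).
by rewrite repR subrK.
Qed.

Lemma rel_step m x P Q S : (0 < m)%N -> (forall n, linear (P n)) ->
  Rel P Q S -> Rel (Pst m x P) (Qst m x Q) (Sst m x S).
Proof.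
move=> m0 Plin HRel n u.
have TD i : forall a b, Tt i (a + b) = Tt i a + Tt i b by case: HD => H _; exact: lin_add.
have T0 i : Tt i 0 = 0 by case: HD => H _; exact: lin0.
have PD i : forall a b, P i (a + b) = P i a + P i b by exact: lin_add.
have P0 i : P i 0 = 0 by exact: lin0.
have HR' k w : cvx (fun i j => Tt i (Q j w)) k = cvx (fun i j => P i (S j w)) k by exact: HRel.
rewrite /Qst (cvx_r1 _ _ _ _ TD T0) HR'.
rewrite (@sh_ext _ m _ (cvx (fun i j => P i (S j (rhoL x u))))); last by move=> l; rewrite HR'.
rewrite -(cvx_r1 _ _ _ _ PD P0).
rewrite (@cvx_ext _ _ (fun i j => P i (Sst m x S j u + sh m (fun l => br x (Sst m x S l u)) j))); last first.
  by move=> i j; rewrite Sst_eq.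
rewrite (cvx_r1 _ _ _ _ PD P0) /Pst cvx_add.
by rewrite -(cvx_shl m (fun i j => P i (br x (Sst m x S j u)))).
Qed.

Lemma lin_Pst m x P n : (forall n, linear (P n)) -> linear (Pst m x P n).
Proof.
move=> Pl; apply: lin_addf => //; rewrite /sh; case: leqP => _.
  by apply: lin_comp; [exact: Pl | exact: brr].
exact: lin_zero.
Qed.

Lemma lin_Qst m x Q n : (forall n, linear (Q n)) -> linear (Qst m x Q n).
Proof.
move=> Ql; apply: lin_addf => //; rewrite /sh; case: leqP => _.
  apply: lin_comp; [exact: Ql | exact: rLr].
exact: lin_zero.
Qed.

Lemma lin_Sst m x S : (0 < m)%N -> (forall n, linear (S n)) -> forall n, linear (Sst m x S n).
Proof.
move=> m0 Sl; elim/ltn_ind => n IH.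
apply: (@lin_ext _ _ _ _ (fun u => (S n u + sh m (fun j => S j (rhoL x u)) n)
                                     - sh m (fun j => br x (Sst m x S j u)) n)).
  by move=> u; rewrite -(@Sst_eq m x S n u m0) addrK.
apply: lin_subf.
  apply: lin_addf => //; rewrite /sh; case: leqP => _; last exact: lin_zero.
  apply: lin_comp; [exact: Sl | exact: rLr].
rewrite /sh; case: leqP => mn; last exact: lin_zero.
apply: lin_comp; [exact: brr | apply: IH; lia].
Qed.

Definition st := ((nat -> g -> g) * (nat -> V -> V) * (nat -> V -> g))%type.

Definition Inv (k : nat) (s : st) : Prop :=
  [/\ (forall n, linear (s.1.1 n)) /\ (forall n, linear (s.1.2 n)) /\ (forall n, linear (s.2 n)),
      (forall y, s.1.1 0%N y = y) /\ (forall u, s.1.2 0%N u = u) /\ (forall u, s.2 0%N u = T u),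
      Hom s.1.1 /\ CompL s.1.1 s.1.2 /\ CompR s.1.1 s.1.2,
      Rel s.1.1 s.1.2 s.2 /\ Def s.2 &
      forall i u, (0 < i <= k)%N -> s.2 i u = 0].

Definition pick (f : V -> g) : g :=
  epsilon (inhabits 0) (fun x => Nij br rhoL rhoR T x /\ forall v, dT0 br rhoL T x v = - f v).

Definition step (k : nat) (s : st) : st :=
  let x := pick (s.2 k.+1) in
  (Pst k.+1 x s.1.1, Qst k.+1 x s.1.2, Sst k.+1 x s.2).

Fixpoint state (k : nat) : st :=
  if k is k'.+1 then step k' (state k') else (@Id0 g, @Id0 V, Tt).

Lemma pick_spec k s : Inv k s ->
  Nij br rhoL rhoR T (pick (s.2 k.+1)) /\
  forall v, dT0 br rhoL T (pick (s.2 k.+1)) v = - s.2 k.+1 v.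
Proof.
case=> [[_ [_ Sl]] [_ [_ S0]] _ [_ DS] Sz].
apply: (@epsilon_spec g (inhabits 0) (fun x => Nij br rhoL rhoR T x /\ forall v, dT0 br rhoL T x v = - s.2 k.+1 v)).
have [Hz _] := HZ (fun v => - s.2 k.+1 v).
have [|x Nx Hx] := Hz.
  split.
    by apply: (@lin_ext _ _ _ _ (fun v => 0 - s.2 k.+1 v)); [move=> v; rewrite add0r | apply: lin_subf; [exact: lin_zero|]].
  move=> u v; rewrite /dT1.
  have E := DS u v k.+1.
  rewrite !(@cvx_ends _ _ k.+1) // ?subn0 ?subnn in E; last first.
    - by move=> i /andP[i0 ik]; rewrite Sz ?br0l //; apply/andP; split => //; lia.
    - by move=> i /andP[i0 ik]; rewrite Sz //; apply/andP; split => //; lia.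
  rewrite /W !S0 in E.
  rewrite brNr brNl rLNl rRNl -(opprD (rhoL (s.2 k.+1 u) v)) (linN Tlin) !opprK -opprD E.
  by rewrite -addrA addNr.
by exists x; split => // v; rewrite -Hx.
Qed.

Lemma inv0 : Inv 0 (state 0).
Proof.
split.
- split; [exact: lin_Id0 | split; [exact: lin_Id0 | by case: HD]].
- split => //; split => // u /=; by case: HD => _ [-> _].
- split.
    move=> n y z; rewrite cvx_l0 => [|i j]; last by case: i => // i _ /=; rewrite br0l.
    by case: n => //= n; rewrite br0r.
  split.
    move=> n y u; rewrite cvx_l0 => [|i j]; last by case: i => // i _ /=; rewrite rL0l.
    by case: n => //= n; rewrite rL0r.
  move=> n y u; rewrite cvx_l0 => [|i j]; last by case: i => // i _ /=; rewrite rR0l.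
  by case: n => //= n; rewrite rR0r.
- split; last by move=> u v n; case: HD => _ [_ H]; exact: H n u v.
  move=> n u /=; rewrite cvx_r0 => [|i j]; last first.
    by case: j => // j _ /=; case: HD => H _; exact: lin0.
  by rewrite cvx_l0 // => i j; case: i.
- by move=> i u; lia.
Qed.

Lemma inv_step k s : Inv k s -> Inv k.+1 (step k s).
Proof.
move=> I; have [Nx Hx] := pick_spec I.
case: I => [[Pl [Ql Sl]] [P0 [Q0 S0]] [HP [HCL HCR]] [HRel DS] Sz].
rewrite /step; set x := pick (s.2 k.+1).
have S'0 u : Sst k.+1 x s.2 0 u = T u.
  have := @Sst_eq k.+1 x s.2 0 u (ltn0Sn k); rewrite /sh /= !addr0 => ->; exact: S0.
split.
- split; [move=> n; exact: lin_Pst | split; [move=> n; exact: lin_Qst | exact: lin_Sst]].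
- split; [move=> y /=; by rewrite /Pst /sh /= addr0 P0 | split; [move=> u /=; by rewrite /Qst /sh /= addr0 Q0 | exact: S'0]].
- split; [exact: hom_step | split; [exact: compL_step | exact: compR_step]].
- split; [exact: rel_step | exact: def_step].
- move=> i u /andP[i0 ik] /=; have E := @Sst_eq k.+1 x s.2 i u (ltn0Sn k).
  rewrite leq_eqVlt in ik; case/orP: ik => [/eqP ei | ilt].
    rewrite ei /sh subnn leqnn S'0 S0 in E.
    move: E; rewrite ei => /(canRL (addrK _)) ->.
    by rewrite -addrA; have := Hx u; rewrite /dT0 => ->; exact: subrr.
  move: E; rewrite /sh leqNgt ilt /= !addr0 => ->; apply: Sz; lia.
Qed.

Lemma inv_state k : Inv k (state k).
Proof. elim: k => [|k IH]; [exact: inv0 | exact: inv_step]. Qed.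

Lemma agreeP n d y : (state (n + d)).1.1 n y = (state n).1.1 n y.
Proof.
elim: d => [|d IH]; first by rewrite addn0.
by rewrite addnS /= /step /= /Pst /sh ltnNge leq_addr /= addr0 IH.
Qed.

Lemma agreeQ n d y : (state (n + d)).1.2 n y = (state n).1.2 n y.
Proof.
elim: d => [|d IH]; first by rewrite addn0.
by rewrite addnS /= /step /= /Qst /sh ltnNge leq_addr /= addr0 IH.
Qed.

Lemma main_triv : trivial_deformation br rhoL rhoR T Tt.
Proof.
exists (pick (Tt 1%N)), (fun n => (state n).1.1 n), (fun n => (state n).1.2 n).
have agP n m y : (m <= n)%N -> (state n).1.1 m y = (state m).1.1 m y.
  by move=> mn; rewrite -(subnKC mn); exact: agreeP.
have agQ n m y : (m <= n)%N -> (state n).1.2 m y = (state m).1.2 m y.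
  by move=> mn; rewrite -(subnKC mn); exact: agreeQ.
split.
  by move=> i; case: (inv_state i) => [[Pl _] _ _ _ _].
split.
  by move=> i; case: (inv_state i) => [[_ [Ql _]] _ _ _ _].
split; first by [].
split.
  by apply: functional_extensionality => y; rewrite /= /step /Pst /sh /= add0r.
split; first by [].
split.
  by apply: functional_extensionality => y; rewrite /= /step /Qst /sh /= add0r.
split.
  move=> n y z; case: (inv_state n) => _ _ [HP _] _ _.
  rewrite -HP; apply: eq_bigr => i _; rewrite !agP //; [exact: leq_subr | have := ltn_ord i; lia].
split.
  move=> n y u; case: (inv_state n) => _ _ [_ [HC _]] _ _.
  rewrite /= HC; apply: eq_bigr => i _; rewrite agP ?agQ //; [exact: leq_subr | have := ltn_ord i; lia].
split.
  move=> n y u; case: (inv_state n) => _ _ [_ [_ HC]] _ _.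
  rewrite /= HC; apply: eq_bigr => i _; rewrite agP ?agQ //; [exact: leq_subr | have := ltn_ord i; lia].
move=> n u; case: (inv_state n) => _ [_ [_ S0]] _ [HRel _] Sz.
transitivity (cvx (fun i j => Tt i ((state n).1.2 j u)) n).
  by apply: eq_bigr => i _; rewrite agQ //; exact: leq_subr.
rewrite HRel; apply: eq_bigr => i _; rewrite agP; last by have := ltn_ord i; lia.
congr (_ _ _); rewrite /const_deformation.
have := ltn_ord i; case E: (n - i)%N => [|j] hi; first exact: S0.
by apply: Sz; lia.
Qed.
End Main.

Theorem proposition3p20 (K : fieldType) (g V : lmodType K)
  (br : g -> g -> g) (rhoL rhoR : g -> V -> V) (T : V -> g) :
  leibniz_algebra br ->
  leibniz_rep br rhoL rhoR ->
  relative_RB br rhoL rhoR T ->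
  (forall f : V -> g,
     Z1 br rhoL rhoR T f <->
     exists2 x, Nij br rhoL rhoR T x & forall v, f v = dT0 br rhoL T x v) ->
  rigid br rhoL rhoR T.
Proof.
move=> HL HR HT HZ Tt HD; exact: (main_triv HL HR HT HZ HD).
Qed.
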